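(* Let $G\cong\mathbb{Z}_m\times Q_{2^n}$, where $m$ is odd and $n\ge 3$. Then the difference graph $\mathcal{D}(G)$ is connected and has diameter at most $3$.
   Context: For a finite group $G$ with identity $e$: the intersection power graph $\mathcal{G}_I(G)$ has vertex set $G$, two distinct non-identity vertices $x,y$ being adjacent iff $\langle x\rangle\cap\langle y\rangle\neq\{e\}$, and $e$ being adjacent to every other vertex. The power graph $\mathcal{P}(G)$ has vertex set $G$, two distinct vertices being adjacent iff one is a power of the other. The difference graph $\mathcal{D}(G)$ is the graph on vertex set $G$ with edge set $E(\mathcal{G}_I(G))\setminus E(\mathcal{P}(G))$, with all isolated vertices removed. $Q_{2^n}$ is the generalized quaternion group $\langle x,y\mid x^{2^{n-1}}=1,\ y^2=x^{2^{n-2}},\ y^{-1}xy=x^{-1}\rangle$ of order $2^n$. *)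

(* Defs.v *)
From mathcomp Require Import all_boot all_fingroup.
From mathcomp Require Import zmodp cyclic gproduct extremal.
Set Implicit Arguments. Unset Strict Implicit. Unset Printing Implicit Defensive.
Local Open Scope group_scope.

Section Graphs.
Variable gT : finGroupType.
Implicit Types (G : {set gT}) (x y : gT).

Definition ipow_adj G x y : bool :=
  [&& x \in G, y \in G, x != y &
      [|| x == 1, y == 1 | <[x]> :&: <[y]> != 1]].

Definition pow_adj G x y : bool :=
  [&& x \in G, y \in G, x != y & (x \in <[y]>) || (y \in <[x]>)].

Definition diff_adj G x y : bool := ipow_adj G x y && ~~ pow_adj G x y.

(* Vertex set of D(G): the non-isolated vertices. *)
Definition diff_vertices G : {set gT} :=
  [set x in G | [exists y in G, diff_adj G x y]].

Definition diff_dist_le G k x y : Prop :=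
  exists2 p : seq gT, size p <= k & path (diff_adj G) x p && (last x p == y).

End Graphs.

(* Main.v *)
Require Import Defs.
From mathcomp Require Import all_boot all_fingroup.
From mathcomp Require Import zmodp cyclic gproduct extremal.
From mathcomp Require Import pgroup zify.
Set Implicit Arguments. Unset Strict Implicit. Unset Printing Implicit Defensive.
Local Open Scope group_scope.


Lemma diff_adjP (gT : finGroupType) (G : {set gT}) x y :
  diff_adj G x y = [&& x \in G, y \in G, x != y, <[x]> :&: <[y]> != 1,
                       x \notin <[y]> & y \notin <[x]>].
Proof.
rewrite /diff_adj /ipow_adj /pow_adj.
case xG: (x \in G); case yG: (y \in G); case nxy: (x != y) => //=.
case xy: (x \in <[y]>); case yx: (y \in <[x]>); rewrite ?andbF ?andbT //=.
have -> : (x == 1) = false by apply: contraFF xy => /eqP->; rewrite group1.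
have -> : (y == 1) = false by apply: contraFF yx => /eqP->; rewrite group1.
by [].
Qed.

Lemma diff_adj_sym (gT : finGroupType) (G : {set gT}) x y :
  diff_adj G x y = diff_adj G y x.
Proof.
rewrite !diff_adjP setIC eq_sym.
by case: (x \in G); case: (y \in G); case: (x \in <[y]>); case: (y \in <[x]>).
Qed.

Lemma cyc_trans (gT : finGroupType) (x y t : gT) :
  x \in <[y]> -> t \in <[x]> -> t \in <[y]>.
Proof. by move=> xy; apply/subsetP; rewrite cycle_subG. Qed.

Lemma cyc_swap (gT : finGroupType) (a b : gT) :
  a \in <[b]> -> #[a] = #[b] -> b \in <[a]>.
Proof.
move=> ab oab; have E : <[a]> = <[b]>.
  by apply/eqP; rewrite eqEcard cycle_subG ab -!orderE oab leqnn.
by rewrite E cycle_id.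
Qed.

Lemma constt_cyc (gT : finGroupType) (pi : nat_pred) (g t : gT) :
  t \in <[g]> -> pi.-elt t -> t \in <[g.`_pi]>.
Proof.
case/cycleP=> e -> pe.
by rewrite -(constt_p_elt pe) consttX mem_cycle.
Qed.

Lemma z_cycle (gT : finGroupType) (G : {group gT}) z g :
  (forall u, u \in G -> #[u] = 2 -> u = z) ->
  g \in G -> ~~ odd #[g] -> z \in <[g]>.
Proof.
move=> zu gG ev; have d2 : 2 %| #[g] by rewrite dvdn2.
set h := #[g] %/ 2.
have hd : h %| #[g] by rewrite -{1}(divnK d2) dvdn_mulr.
have hpos : 0 < h by rewrite divn_gt0 // dvdn_leq.
have oh : #[g ^+ h] = 2 by rewrite orderXdiv // -{1}(divnK d2) mulKn.
by rewrite -(zu _ (groupX h gG) oh) mem_cycle.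
Qed.

Lemma vertex_not_prime (gT : finGroupType) (G : {set gT}) u y :
  diff_adj G u y -> ~~ prime #[u].
Proof.
rewrite diff_adjP => /and3P[uG yG /and4P[_ I nuy _]].
apply/negP=> pu; have [t /setIP[tu ty] nt1] := trivgPn _ I.
have Et : <[t]> = <[u]>.
  apply/eqP; rewrite eqEcard cycle_subG tu /= -!orderE.
  have := order_dvdG tu; rewrite -orderE.
  by move/(prime_nt_dvdP pu); rewrite order_eq1 => /(_ nt1) ->.
by move: nuy; rewrite (cyc_trans ty) // Et cycle_id.
Qed.

Lemma vertex_neq1 (gT : finGroupType) (G : {set gT}) u y :
  diff_adj G u y -> u != 1.
Proof.
rewrite diff_adjP => /and3P[_ _ /and4P[_ _ nuy _]].
by apply: contraNneq nuy => ->; rewrite group1.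
Qed.


Lemma two_elt4 (gT : finGroupType) (x : gT) : #[x] = 4 -> 2.-elt x.
Proof. by rewrite /p_elt => ->. Qed.

Lemma odd_elt (gT : finGroupType) (x : gT) : odd #[x] = 2^'.-elt x.
Proof. by rewrite /p_elt odd_2'nat. Qed.

Lemma hub_k (gT : finGroupType) (a k : gT) :
  commute a k -> odd #[a] -> #[k] = 4 ->
  (a * k).`_2 = k /\ (a * k).`_2^' = a.
Proof.
move=> c oa ok; rewrite !consttM //; split.
  rewrite (constt_p_elt (two_elt4 ok)); rewrite (_ : a.`_2 = 1) ?mul1g //.
  by apply/constt1P; rewrite -odd_elt.
rewrite (constt_p_elt (pi := 2^') _); last by rewrite -odd_elt.
rewrite (_ : k.`_2^' = 1) ?mulg1 //.
by apply/constt1P; rewrite p_eltNK two_elt4.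
Qed.

Lemma two_k (gT : finGroupType) (a b g : gT) :
  #[a] = 4 -> #[b] = 4 -> a \notin <[b]> ->
  a \in <[g]> -> b \in <[g]> -> False.
Proof.
move=> oi oj nij ig jg.
have sa : <[a]> \subset <[g]> by rewrite cycle_subG.
have sb : <[b]> \subset <[g]> by rewrite cycle_subG.
have := eq_subG_cyclic (cycle_cyclic g) sa sb.
rewrite -!orderE oi oj eqxx => /eqP E.
by move: nij; rewrite -E cycle_id.
Qed.


Definition Hyp (gT : finGroupType) (G : {group gT}) (z : gT) (k : nat -> gT) :=
  [/\ (forall u, u \in G -> #[u] = 2 -> u = z), #[z] = 2,
      (forall i, i < 3 -> k i \in G /\ #[k i] = 4),
      (forall i j, i < 3 -> j < 3 -> i != j -> k i \notin <[k j]>)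
    & (forall a b, a \in G -> b \in G -> odd #[a] -> commute a b)].

Lemma hub (gT : finGroupType) (G : {group gT}) z k a b i j :
  Hyp G z k -> a \in G -> b \in G -> odd #[a] -> odd #[b] ->
  i < 3 -> j < 3 -> i != j -> diff_adj G (a * k i) (b * k j).
Proof.
move=> [zu oz kP kd cn] aG bG oa ob i3 j3 nij.
have [kiG oki] := kP i i3; have [kjG okj] := kP j j3.
have [hi _] := hub_k (cn _ _ aG kiG oa) oa oki.
have [hj _] := hub_k (cn _ _ bG kjG ob) ob okj.
have kw : k i \in <[a * k i]> by rewrite -{1}hi cycle_constt.
have kw' : k j \in <[b * k j]> by rewrite -{1}hj cycle_constt.
have zi : z \in <[k i]> by apply: (z_cycle zu) => //; rewrite oki.
have zj : z \in <[k j]> by apply: (z_cycle zu) => //; rewrite okj.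
have n1 : a * k i \notin <[b * k j]>.
  apply/negP=> H; apply: (two_k oki okj (kd _ _ i3 j3 nij) _ kw').
  exact: cyc_trans H kw.
have n2 : b * k j \notin <[a * k i]>.
  apply/negP=> H; apply: (two_k okj oki (kd _ _ j3 i3 _) _ kw) => //.
    by rewrite eq_sym.
  exact: cyc_trans H kw'.
rewrite diff_adjP (groupM aG kiG) (groupM bG kjG) n1 n2 !andbT /=; apply/andP; split.
  by apply: contraNneq n1 => ->; rewrite cycle_id.
apply/trivgPn; exists z; last by rewrite -order_eq1 oz.
by rewrite inE (cyc_trans kw zi) (cyc_trans kw' zj).
Qed.

Lemma even_adj (gT : finGroupType) (G : {group gT}) z k u y i :
  Hyp G z k -> diff_adj G u y -> ~~ odd #[u] -> i < 3 -> k i \notin <[u]> ->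
  diff_adj G u (k i).
Proof.
move=> [zu oz kP kd cn] H ev i3 nk; have [kiG oki] := kP i i3.
have uG : u \in G by move: H; rewrite diff_adjP => /andP[].
have nuk : u \notin <[k i]>.
  apply/negP=> uk.
  have d : #[u] %| 4 by rewrite -oki orderE; apply: order_dvdG.
  have o4 : #[u] = 4.
    have np := vertex_not_prime H.
    have n1 : #[u] != 1%N by rewrite order_eq1 (vertex_neq1 H).
    move: (#[u]) d np n1 => [|[|[|[|[|o]]]]] //.
  by move: nk; rewrite (cyc_swap uk) // o4 oki.
rewrite diff_adjP uG kiG nk nuk !andbT /=; apply/andP; split.
  by apply: contraNneq nk => ->; rewrite cycle_id.
apply/trivgPn; exists z; last by rewrite -order_eq1 oz.
by rewrite inE (z_cycle zu) //= (z_cycle zu) // oki.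
Qed.


Lemma odd_adj (gT : finGroupType) (G : {group gT}) z k u y i :
  Hyp G z k -> diff_adj G u y -> odd #[u] -> i < 3 ->
  diff_adj G u (y.`_2^' * k i).
Proof.
move=> [zu oz kP kd cn] H ou i3; have [kiG oki] := kP i i3.
have := H; rewrite diff_adjP => /and3P[uG yG /and4P[_ I nuy _]].
set a := y.`_2^'.
have ay : a \in <[y]> by apply: cycle_constt.
have aG : a \in G by apply: (subsetP _ _ ay); rewrite cycle_subG.
have oa : odd #[a] by rewrite odd_elt; apply: p_elt_constt.
have [h2 h2'] := hub_k (cn _ _ aG kiG oa) oa oki.
set w := a * k i in h2 h2' *.
have kw : k i \in <[w]> by rewrite -{1}h2 cycle_constt.
have aw : a \in <[w]> by rewrite -{1}h2' cycle_constt.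
have nwu : w \notin <[u]>.
  apply/negP=> wu; have := order_dvdG (cyc_trans wu kw).
  rewrite -orderE oki => d4; have : 2 %| #[u] by apply: dvdn_trans d4.
  by rewrite dvdn2 ou.
have nuw : u \notin <[w]>.
  apply/negP=> uw; have := constt_cyc (pi := 2^') uw; rewrite -odd_elt h2' => /(_ ou) ua.
  by move: nuy; rewrite (cyc_trans ay ua).
rewrite diff_adjP uG (groupM aG kiG) nwu nuw !andbT /=; apply/andP; split.
  by apply: contraNneq nwu => <-; rewrite cycle_id.
have [t /setIP[tu ty] nt1] := trivgPn _ I.
apply/trivgPn; exists t => //; rewrite inE tu /=.
have te : 2^'.-elt t.
  by rewrite /p_elt; apply: (pnat_dvd (order_dvdG tu)); rewrite -orderE -odd_2'nat.
exact: cyc_trans aw (constt_cyc ty te).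
Qed.

Lemma good (gT : finGroupType) (G : {group gT}) z k u :
  Hyp G z k -> u \in diff_vertices G ->
  exists2 a, a \in G /\ odd #[a] &
    forall i j, i < 3 -> j < 3 -> i != j ->
      diff_adj G u (a * k i) || diff_adj G u (a * k j).
Proof.
move=> HH; rewrite inE => /andP[uG /exists_inP[y yG H]].
have [zu oz kP kd cn] := HH.
case: (boolP (odd #[u])) => ou.
  exists y.`_2^'; last by move=> i j i3 _ _; rewrite (odd_adj HH H ou i3).
  split; last by rewrite odd_elt; apply: p_elt_constt.
  by apply: (subsetP _ _ (cycle_constt _ y)); rewrite cycle_subG.
exists 1; first by rewrite group1 order1.
move=> i j i3 j3 nij; rewrite !mul1g.
case: (boolP (k i \in <[u]>)) => ki; last by rewrite (even_adj HH H ou i3 ki).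
case: (boolP (k j \in <[u]>)) => kj; last by rewrite (even_adj HH H ou j3 kj) orbT.
have [_ oki] := kP i i3; have [_ okj] := kP j j3.
by case: (two_k oki okj (kd _ _ i3 j3 nij) ki kj).
Qed.

Lemma main_abs (gT : finGroupType) (G : {group gT}) z k :
  Hyp G z k ->
  diff_vertices G != set0 /\
  (forall x y, x \in diff_vertices G -> y \in diff_vertices G ->
     diff_dist_le G 3 x y).
Proof.
move=> HH; have [zu oz kP kd cn] := HH.
split.
  apply/set0Pn; exists (k 0); rewrite inE (kP 0 isT).1 /=.
  apply/exists_inP; exists (k 1%N); first exact: (kP 1%N isT).1.
  have := hub HH (group1 G) (group1 G) (etrans (congr1 odd (order1 _)) isT) (etrans (congr1 odd (order1 _)) isT)
    (isT : 0 < 3) (isT : 1 < 3) (isT : 0 != 1%N).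
  by rewrite !mul1g.
move=> u v /(good HH)[a [aG oa] Pu] /(good HH)[b [bG ob] Pv].
suff [i [j [i3 j3 nij Hu Hv]]] : exists i j,
    [/\ i < 3, j < 3, i != j, diff_adj G u (a * k i) & diff_adj G v (b * k j)].
  exists [:: a * k i; b * k j; v] => //.
  by rewrite /= Hu (hub HH aG bG oa ob i3 j3 nij) diff_adj_sym Hv eqxx.
case: (boolP (diff_adj G u (a * k 0))) => u0.
  case/orP: (Pv 1%N 2 isT isT isT) => v'.
    by exists 0, 1%N.
  by exists 0, 2.
have u1 := Pu 0 1%N isT isT isT; rewrite (negbTE u0) /= in u1.
have u2 := Pu 0 2 isT isT isT; rewrite (negbTE u0) /= in u2.
case/orP: (Pv 0 1%N isT isT isT) => v'.
  by exists 1%N, 0.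
by exists 2, 1%N.
Qed.


Lemma Qfacts l :
  exists zq : 'Q_(2 ^ l.+3), exists kq : nat -> 'Q_(2 ^ l.+3),
  [/\ #[zq] = 2, (forall u : 'Q_(2 ^ l.+3), #[u] = 2 -> u = zq),
      (forall i, i < 3 -> #[kq i] = 4)
    & (forall i j, i < 3 -> j < 3 -> i != j -> kq i \notin <[kq j]>)].
Proof.
have n2 : 2 < l.+3 by [].
have [[x y] genQ [oy _ _]] := generators_quaternion n2 (isog_refl 'Q_(2 ^ l.+3)).
have [[_ o4 _] _ [_ _ uq _ _] _ _] := quaternion_structure n2 genQ (isog_refl _).
have [_ _ ox /setDP[_ nyx]] := genQ.
have e0 : 0 < 2 ^ l by rewrite expn_gt0.
have ox' : #[x] = (2 * (2 * 2 ^ l))%N by rewrite ox /= !expnS.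
have oz : #[x ^+ (2 ^ l.+1)] = 2.
  rewrite orderXdiv ox' expnS; last by rewrite dvdn_mull.
  by rewrite [(2 * (2 * _))%N]mulnC mulKn // muln_gt0 e0.
have ok0 : #[x ^+ (2 ^ l)] = 4.
  by rewrite orderXdiv ox' ?mulnA ?mulnK ?dvdn_mull // dvdn_mull.
have xyx : x * y \notin <[x]> by rewrite groupMl ?cycle_id.
have oxy : #[x * y] = 4 by apply: o4; rewrite !inE xyx.
have k0x : x ^+ (2 ^ l) \in <[x]> by apply: mem_cycle.
have f01 : y \notin <[x ^+ (2 ^ l)]>.
  by apply: contra nyx => H; apply: cyc_trans k0x H.
have f02 : x * y \notin <[x ^+ (2 ^ l)]>.
  by apply: contra xyx => H; apply: cyc_trans k0x H.
have f12 : x * y \notin <[y]>.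
  apply/negP=> H; rewrite groupMr ?cycle_id // in H.
  have le : #[x] <= 4 by rewrite -oy !orderE; apply: subset_leq_card; rewrite cycle_subG.
  have e4 : #[x] = #[y] by rewrite oy; move: le; rewrite ox'; lia.
  by move: nyx; rewrite (cyc_swap H e4).
have sw : forall a b : 'Q_(2 ^ l.+3), #[a] = 4 -> #[b] = 4 ->
    b \notin <[a]> -> a \notin <[b]>.
  move=> a b oa ob; apply: contra => ab; apply: cyc_swap ab _; by rewrite oa ob.
exists (x ^+ (2 ^ l.+1)).
exists (fun i => if i == 0 then x ^+ (2 ^ l) else if i == 1%N then y else x * y).
split => //.
- by move=> u ou; apply: uq.
- by move=> [|[|[|i]]].
move=> [|[|[|i]]] [|[|[|j]]] //= _ _ _.
- by apply: sw.
- by apply: sw.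
- by apply: sw.
Qed.


Lemma Q2elt l (q : 'Q_(2 ^ l.+3)) : 2.-elt q.
Proof.
apply: (pnat_dvd (order_dvdG (in_setT q))).
by rewrite card_quaternion // pnatX.
Qed.

Lemma Pfacts (Q : finGroupType) m (zq : Q) :
  odd m -> (forall q : Q, 2.-elt q) -> (forall u : Q, #[u] = 2 -> u = zq) ->
  (forall u : 'Z_m * Q, u \in setX (Zp m) [set: Q] -> #[u] = 2 -> u = (1, zq))
  /\ (forall a b : 'Z_m * Q, a \in setX (Zp m) [set: Q] -> odd #[a] -> commute a b).
Proof.
move=> om q2 uq; split.
  move=> [u1 u2]; rewrite in_setX => /andP[u1Z _] ou.
  have d1 : #[u1] %| 2.
    by have := morph_order [morphism of @fst 'Z_m Q] (in_setT (u1, u2)); rewrite /= ou.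
  have d2 : #[u2] %| 2.
    by have := morph_order [morphism of @snd 'Z_m Q] (in_setT (u1, u2)); rewrite /= ou.
  have dm : #[u1] %| m by have := order_dvdG u1Z; rewrite card_Zp // odd_gt0.
  have e1 : u1 = 1.
    apply/eqP; rewrite -order_eq1; apply/idPn => n1.
    move/(prime_nt_dvdP (isT : prime 2) n1): d1 => e2.
    by move: dm; rewrite e2 dvdn2 om.
  subst u1.
  have n2 : #[u2] != 1%N.
    rewrite order_eq1; apply/eqP => e; move: ou; rewrite e.
    by rewrite (_ : ((1, 1) : 'Z_m * Q) = 1) // order1.
  move/(prime_nt_dvdP (isT : prime 2) n2): d2 => e2.
  by rewrite (uq _ e2).
move=> [a1 a2] [b1 b2] _ oa.
have da : #[a2] %| #[(a1, a2)].
  by have := morph_order [morphism of @snd 'Z_m Q] (in_setT (a1, a2)).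
have a21 : a2 = 1.
  apply/eqP; rewrite -order_eq1; apply/eqP; apply: (pnat_1 (q2 a2)).
  by apply: (pnat_dvd da); rewrite -odd_2'nat.
subst a2; rewrite /commute.
change ((a1 * b1, 1 * b2) = (b1 * a1, b2 * 1)).
by rewrite mul1g mulg1 Zp_mulgC.
Qed.


Lemma injm_cyc (aT rT : finGroupType) (D : {group aT}) (f : {morphism D >-> rT}) x y :
  'injm f -> x \in D -> y \in D -> (f x \in <[f y]>) = (x \in <[y]>).
Proof.
move=> injf xD yD; rewrite -morphim_cycle //; apply/idP/idP => H.
  by have := mem_morphpre xD H; rewrite injmK // cycle_subG.
exact: mem_morphim.
Qed.

Unset Implicit Arguments.

Theorem lemma4p12 (gT : finGroupType) (G : {group gT}) (m n : nat) :
  odd m -> 3 <= n ->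
  G \isog setX (Zp m) 'Q_(2 ^ n) ->
  diff_vertices G != set0 /\
  (forall x y, x \in diff_vertices G -> y \in diff_vertices G ->
     diff_dist_le G 3 x y).
Proof.
move=> om n3 iso.
case: n n3 iso => [|[|[|l]]] // _ iso.
have [zq [kq [ozq uq okq kdq]]] := Qfacts l.
have [PF1 PF3] := Pfacts om (@Q2elt l) uq.
move: iso; rewrite isog_sym => /isogP[f injf fP].
have inP : forall q, ((1, q) : 'Z_m * 'Q_(2 ^ l.+3)) \in setX (Zp m) 'Q_(2 ^ l.+3).
  by move=> q; rewrite in_setX group1 in_setT.
have o1 : forall q, #[((1, q) : 'Z_m * 'Q_(2 ^ l.+3))] = #[q].
  by move=> q; apply: (order_injm (f := pair1g_morphism 'Z_m _) (injm_pair1g _ _) (in_setT q)).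
apply: (@main_abs _ _ (f (1, zq)) (fun i => f (1, kq i))); split.
- move=> u; rewrite -fP => /morphimP[x xP _ ->] ou.
  by rewrite (order_injm injf xP) in ou; rewrite (PF1 x xP ou).
- by rewrite (order_injm injf (inP zq)) o1.
- move=> i i3; split; first by rewrite -fP mem_morphim.
  by rewrite (order_injm injf (inP _)) o1 okq.
- move=> i j i3 j3 nij; rewrite injm_cyc ?inP //.
  by rewrite -[(1, kq i)]/(pair1g_morphism 'Z_m _ (kq i)) -[(1, kq j)]/(pair1g_morphism 'Z_m _ (kq j)) injm_cyc ?in_setT ?injm_pair1g ?kdq.
- move=> a b; rewrite -fP => /morphimP[x xP _ ->] /morphimP[y yP _ ->] oa.
  rewrite (order_injm injf xP) in oa.
  by rewrite /commute -!morphM // (PF3 x y xP oa).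
Qed.
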